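(* In a two-player perfect-information game of depth $D$, let $\{\tilde U_s\}$ be learned EPFs with targets $\tilde U'_s$, and let $\tilde Q_s$ be the induced leader payoff functions, as in the context. Suppose $L_\infty(\tilde U_s,\tilde U'_s)\le\epsilon$ for all $s\in\mathcal S$. Then $|\tilde Q_s(\mu_2)-\tilde U_s(\mu_2)|\le\epsilon D$ for all $s\in\mathcal S$ and all $\mu_2\in[\underline V(s),\overline V(s)]$.
   Context: A two-player perfect-information game is a finite rooted tree with states $\mathcal S$. Its leaves $\mathcal L$ carry payoffs $r_1(\ell),r_2(\ell)$ for the leader $\mathsf P_1$ and the follower $\mathsf P_2$. Non-leaf states are partitioned into leader states $\mathcal S_1$ and follower states $\mathcal S_2$, and $\mathcal C(s)$ denotes the children of $s$. The depth $D$ is the maximum number of edges on a root-to-leaf path. Bounds, defined by backward induction: - $\underline V(\ell)=\overline V(\ell)=r_2(\ell)$ for leaves; - $\underline V(s)=\min_{s'}\underline V(s')$ for $s\in\mathcal S_1$; - $\underline V(s)=\max_{s'}\underline V(s')$ for $s\in\mathcal S_2$; - $\overline V(s)=\max_{s'}\overline V(s')$ for every non-leaf $s$. For $s\in\mathcal S_2$ and $s'\in\mathcal C(s)$, let $\tau(s')=\max_{s^!\in\mathcal C(s),s^!\ne s'}\underline V(s^!)$. Let $\beta(s')=\tau(s')$ if the parent of $s'$ is in $\mathcal S_2$, and $-\infty$ if it is in $\mathcal S_1$. Operators, for $g:\mathbb R\to\mathbb R\cup\{-\infty\}$: - $\bigwedge_i g_i$ is the pointwise infimum of all concave $h\ge\max_i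 g_i$; - $[g\triangleright t](\mu)=g(\mu)$ for $\mu\ge t$ and $-\infty$ otherwise. Learned EPFs: for a leaf, $\tilde U_\ell(\mu)=r_1(\ell)$ if $\mu=r_2(\ell)$ and $-\infty$ otherwise. For non-leaf $s$, $\tilde U_s$ is the piecewise linear interpolation of finitely many points with $x$-coordinates in $[\underline V(s),\overline V(s)]$ including both endpoints. It is real-valued there and $-\infty$ outside. Targets: $\tilde U'_s=\bigwedge_{s'\in\mathcal C(s)}(\tilde U_{s'}\triangleright\beta(s'))$ for non-leaf $s$, and $\tilde U'_\ell=\tilde U_\ell$. The loss is $L_\infty(f,g)=\sup_\mu|f(\mu)-g(\mu)|$, with $|(-\infty)-(-\infty)|=0$. Induced payoff $\tilde Q_s:[\underline V(s),\overline V(s)]\to\mathbb R$: for leaves, $\tilde Q_\ell(r_2(\ell))=r_1(\ell)$. For non-leaf $s$ and promise $\mu_2$, let $(\tilde s',\tilde s'',\tilde t,\tilde\mu',\tilde\mu'')$ be the chosen maximizer, over $s',s''\in\mathcal C(s)$, $t\in[0,1]$, $\mu',\mu''$ with $t\mu'+(1-t)\mu''=\mu_2$, of $t[\tilde U_{s'}\triangleright\beta(s')](\mu')+(1-t)[\tilde U_{s''}\triangleright\beta(s'')](\mu'')$. Then $$\tilde Q_s(\mu_2)=\tilde t\,\tilde Q_{\tilde s'}(\tilde\mu')+(1-\tilde t)\,\tilde Q_{\tilde s''}(\tilde\mu'').$$ Thus $\tilde Q_s(\mu_2)$ is the leader's expected payoff when play starts at $s$ with promise $\mu_2$ to the follower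 and proceeds by this one-step-lookahead rule (moving to $\tilde s'$ with probability $\tilde t$ and promise $\tilde\mu'$, and to $\tilde s''$ with probability $1-\tilde t$ and promise $\tilde\mu''$). *)

(* Defs.v *)
From HB Require Import structures.
From mathcomp Require Import all_boot all_order all_algebra.
From mathcomp Require Import boolp classical_sets reals constructive_ereal ereal.
Set Implicit Arguments.
Unset Strict Implicit.
Unset Printing Implicit Defensive.
Import Order.TTheory GRing.Theory Num.Theory.
Local Open Scope ring_scope.

(* Game trees.  A state of the game is identified by its address: the     *)
(* sequence of child indices on the path from the root.                   *)
(* [Node true cs]  : leader state (S_1) with children cs                  *)
(* [Node false cs] : follower state (S_2) with children cs                *)
(* [Leaf r1 r2]    : leaf with payoffs r1 (leader) and r2 (follower)      *)
Inductive tree (R : Type) :=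
| Leaf of R & R
| Node of bool & seq (tree R).

Arguments Leaf {R}.
Arguments Node {R}.

Section Game.
Variable R : realType.

Fixpoint wf_tree (t : tree R) : bool :=
  match t with
  | Leaf _ _ => true
  | Node _ cs => (0 < size cs)%N && all wf_tree cs
  end.

Fixpoint subtree (t : tree R) (p : seq nat) : option (tree R) :=
  match p with
  | [::] => Some t
  | i :: p' =>
      match t with
      | Leaf _ _ => None
      | Node _ cs => if (i < size cs)%N then subtree (nth t cs i) p' else None
      end
  end.

Fixpoint depth (t : tree R) : nat :=
  match t with
  | Leaf _ _ => 0%N
  | Node _ cs => (foldr maxn 0%N (map depth cs)).+1
  end.

Definition minl (s : seq R) : R := foldr Num.min (head 0 s) s.
Definition maxl (s : seq R) : R := foldr Num.max (head 0 s) s.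

Fixpoint Vlo (t : tree R) : R :=
  match t with
  | Leaf _ r2 => r2
  | Node leader cs => if leader then minl (map Vlo cs) else maxl (map Vlo cs)
  end.

Fixpoint Vhi (t : tree R) : R :=
  match t with
  | Leaf _ r2 => r2
  | Node _ cs => maxl (map Vhi cs)
  end.

Local Open Scope ereal_scope.

Definition beta (leader : bool) (cs : seq (tree R)) (i : nat) : \bar R :=
  if leader then -oo
  else \big[maxe/-oo]_(j < size cs | j != i :> nat)
         (Vlo (nth (Leaf 0%R 0%R) cs j))%:E.

Definition trunc (g : R -> \bar R) (t : \bar R) : R -> \bar R :=
  fun mu => if t <= mu%:E then g mu else -oo.

Definition concave_e (h : R -> \bar R) : Prop :=
  forall (x y t : R), (0 <= t <= 1)%R ->
    t%:E * h x + (1 - t)%:E * h y <= h (t * x + (1 - t) * y)%R.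

Definition meet_op (gs : seq (R -> \bar R)) : R -> \bar R :=
  fun mu => ereal_inf [set h mu | h in
    [set h : R -> \bar R | [/\ concave_e h,
                               (forall x, h x < +oo) &
                               (forall x, \big[maxe/-oo]_(g <- gs) g x <= h x)]]].

(* L_infinity loss, with |(-oo) - (-oo)| = 0 *)
Definition ediff (a b : \bar R) : \bar R :=
  if (a == -oo) && (b == -oo) then 0 else `|a - b|.

Definition Linf (f g : R -> \bar R) : \bar R :=
  ereal_sup [set ediff (f mu) (g mu) | mu in [set: R]].

Definition leaf_epf (r1 r2 : R) : R -> \bar R :=
  fun mu => if mu == r2 then r1%:E else -oo.

Definition pl_interp (lo hi : R) (f : R -> \bar R) : Prop :=
  exists xs ys : seq R,
    [/\ size xs = size ys, (0 < size xs)%N, sorted <%R xs,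
        xs`_0 = lo & xs`_(size xs).-1 = hi] /\
    [/\ (forall mu, ~ (lo <= mu <= hi)%R -> f mu = -oo),
        (forall k, (k < size xs)%N -> f xs`_k = (ys`_k)%:E) &
        (forall k mu, (k.+1 < size xs)%N -> (xs`_k <= mu <= xs`_k.+1)%R ->
           f mu = (ys`_k + (ys`_k.+1 - ys`_k) * (mu - xs`_k)
                                 / (xs`_k.+1 - xs`_k))%:E)].

(* learned EPFs: U p is the EPF of the state at address p *)
Definition learned_epfs (g : tree R) (U : seq nat -> R -> \bar R) : Prop :=
  (forall p r1 r2, subtree g p = Some (Leaf r1 r2) -> U p = leaf_epf r1 r2) /\
  (forall p leader cs, subtree g p = Some (Node leader cs) ->
     pl_interp (Vlo (Node leader cs)) (Vhi (Node leader cs)) (U p)).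

Definition target (U : seq nat -> R -> \bar R) (p : seq nat) (s : tree R)
  : R -> \bar R :=
  match s with
  | Leaf _ _ => U p
  | Node leader cs =>
      meet_op [seq trunc (U (rcons p i)) (beta leader cs i)
              | i <- iota 0 (size cs)]
  end.

Definition lookahead_obj (U : seq nat -> R -> \bar R) (p : seq nat)
  (leader : bool) (cs : seq (tree R)) (i j : nat) (t mu' mu'' : R) : \bar R :=
  t%:E * trunc (U (rcons p i)) (beta leader cs i) mu'
  + (1 - t)%:E * trunc (U (rcons p j)) (beta leader cs j) mu''.

Definition lookahead_feasible (cs : seq (tree R)) (mu2 : R)
  (i j : nat) (t mu' mu'' : R) : Prop :=
  [/\ (i < size cs)%N, (j < size cs)%N, (0 <= t <= 1)%R &
      (t * mu' + (1 - t) * mu'' = mu2)%R].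

(* Q is an induced payoff function (for some choice of maximizers):
   Q p mu2 is the leader's payoff from the state at address p with
   promise mu2. *)
Definition induced_payoff (g : tree R) (U : seq nat -> R -> \bar R)
  (Q : seq nat -> R -> R) : Prop :=
  (forall p r1 r2, subtree g p = Some (Leaf r1 r2) -> Q p r2 = r1) /\
  (forall p leader cs mu2, subtree g p = Some (Node leader cs) ->
     (Vlo (Node leader cs) <= mu2 <= Vhi (Node leader cs))%R ->
     exists i j t mu' mu'',
       [/\ lookahead_feasible cs mu2 i j t mu' mu'',
           (forall i' j' t' nu' nu'', lookahead_feasible cs mu2 i' j' t' nu' nu'' ->
              lookahead_obj U p leader cs i' j' t' nu' nu''
              <= lookahead_obj U p leader cs i j t mu' mu'') &
           Q p mu2 = (t * Q (rcons p i) mu' + (1 - t) * Q (rcons p j) mu'')%R]).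

End Game.

(* Main.v *)
Require Import Defs.
From HB Require Import structures.
From mathcomp Require Import all_boot all_order all_algebra.
From mathcomp Require Import boolp classical_sets reals constructive_ereal ereal.
From mathcomp Require Import ring lra.
Import Order.TTheory GRing.Theory Num.Theory.
Set Implicit Arguments.
Unset Strict Implicit.
Unset Printing Implicit Defensive.
Local Open Scope ring_scope.

Section H.
Variable R : realType.

Lemma seg (xs : seq R) mu : sorted <%R xs -> (0 < size xs)%N ->
  xs`_0 <= mu <= xs`_(size xs).-1 ->
  (exists2 k, (k < size xs)%N & mu = xs`_k) \/
  (exists k, (k.+1 < size xs)%N /\ xs`_k <= mu <= xs`_k.+1).
Proof.
elim: xs => [|a xs IH] //= Hs _.
case: xs IH Hs => [|b xs] IH Hs /= Hmu.
  by left; exists 0%N => //; apply/eqP; rewrite eq_le andbC.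
case/andP: Hmu => Ham Hml.
case: (leP mu b) => Hb.
  by right; exists 0%N; rewrite /= Ham Hb.
have Hs' : sorted <%R (b :: xs) by case/andP: Hs.
have := IH Hs' isT; rewrite /= (ltW Hb) Hml => /(_ isT) [[k Hk ->]|[k [Hk Hm]]].
  by left; exists k.+1.
by right; exists k.+1.
Qed.

Lemma pl_fin lo hi (f : R -> \bar R) mu : pl_interp lo hi f -> lo <= mu <= hi ->
  exists v, f mu = v%:E.
Proof.
move=> [xs [ys [[Hsz Hpos Hs H0 H1] [Hout Hnode Hseg]]]] Hmu.
rewrite -H0 -H1 in Hmu.
case: (seg Hs Hpos Hmu) => [[k Hk ->]|[k [Hk Hm]]].
  by exists ys`_k; apply: Hnode.
by exists (ys`_k + (ys`_k.+1 - ys`_k) * (mu - xs`_k) / (xs`_k.+1 - xs`_k)); apply: Hseg.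
Qed.

Lemma pl_in lo hi (f : R -> \bar R) mu v : pl_interp lo hi f -> f mu = v%:E ->
  lo <= mu <= hi.
Proof.
move=> [xs [ys [_ [Hout _ _]]]] H.
by apply: contrapT => /Hout; rewrite H.
Qed.

Lemma fin_of (a : \bar R) : a != -oo%E -> a != +oo%E -> exists v, a = v%:E.
Proof. by case: a => // r; exists r. Qed.

Lemma subtree_rcons (g : tree R) p b cs i : subtree g p = Some (Node b cs) ->
  (i < size cs)%N -> subtree g (rcons p i) = Some (nth (Leaf 0 0) cs i).
Proof.
elim: p g => [|j p IH] g /=.
  by case=> -> Hi /=; rewrite Hi; congr Some; apply: set_nth_default.
case: g => // b' cs'; case: ifP => // _; exact: IH.
Qed.

Lemma foldr_maxn_ge (s : seq nat) x : x \in s -> (x <= foldr maxn 0 s)%N.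
Proof.
elim: s => //= a s IH; rewrite in_cons => /orP[/eqP ->|/IH H].
  exact: leq_maxl.
by apply: leq_trans H _; exact: leq_maxr.
Qed.

Lemma foldr_nth (T : Type) (F : T -> nat) (s : seq T) d i : (i < size s)%N ->
  (F (nth d s i) <= foldr maxn 0 (map F s))%N.
Proof.
elim: s i => //= a s IH [|i] /= Hi; first exact: leq_maxl.
by apply: leq_trans (IH i Hi) _; exact: leq_maxr.
Qed.

Lemma depth_child b (cs : seq (tree R)) i d : (i < size cs)%N ->
  (depth (nth d cs i) < depth (Node b cs))%N.
Proof. by move=> Hi /=; rewrite ltnS; apply: foldr_nth. Qed.

Lemma depth_sub (g : tree R) p s : subtree g p = Some s -> (depth s <= depth g)%N.
Proof.
elim: p g => [|j p IH] g /=; first by case=> ->.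
case: g => // b cs; case: ifP => // Hj /IH H.
by apply: (leq_trans H); apply: ltnW; apply: depth_child.
Qed.


Local Open Scope ereal_scope.

Lemma step_concave (h0 : R -> \bar R) (o : \bar R) (sg m : R) :
  concave_e h0 -> o <= h0 m -> sg != 0%R ->
  concave_e (fun x => if (sg * (x - m) < 0)%R then -oo else if x == m then o else h0 x).
Proof.
move=> Hc0 Hom sgn0 x y t /andP[t0 t1] /=.
have [->|tn0] := eqVneq t 0%R.
  by rewrite mul0e add0e subr0 mul1e mul0r add0r mul1r.
have [->|tn1] := eqVneq t 1%R.
  by rewrite mul1e subrr mul0e adde0 mul0r addr0 mul1r.
have tp : (0 < t)%R by rewrite lt_def tn0.
have t1p : (0 < 1 - t)%R by rewrite subr_gt0 lt_def eq_sym tn1 t1.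
have hle : forall v, (if v == m then o else h0 v) <= h0 v.
  by move=> v; case: eqVneq => [->|]. 
have Hz : (sg * (t * x + (1 - t) * y - m) = t * (sg * (x - m)) + (1 - t) * (sg * (y - m)))%R.
  by ring.
have [Hx|Hx] := ltP (sg * (x - m))%R 0%R.
  by rewrite gt0_muleNy ?lte_fin // addNye leNye.
have [Hy|Hy] := ltP (sg * (y - m))%R 0%R.
  by rewrite (gt0_muleNy (x:=(1-t)%:E)) ?lte_fin // addeNy leNye.
have Hz0 : (0 <= sg * (t * x + (1 - t) * y - m))%R.
  by rewrite Hz addr_ge0 // mulr_ge0 // ltW.
rewrite (ltNge _ 0%R) Hz0 /=.
case: (eqVneq (t * x + (1 - t) * y)%R m) => Hzm.
  have : (sg * (t * x + (1 - t) * y - m) = 0)%R by rewrite Hzm subrr mulr0.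
  have H1 : (0 <= t * (sg * (x - m)))%R by rewrite mulr_ge0 // ltW.
  have H2 : (0 <= (1 - t) * (sg * (y - m)))%R by rewrite mulr_ge0 // ltW.
  rewrite Hz => /eqP; rewrite paddr_eq0 // !mulf_eq0.
  rewrite (gt_eqF tp) (gt_eqF t1p) (negbTE sgn0) /= !subr_eq0 => /andP[/eqP xm /eqP ym].
  rewrite xm ym eqxx.
  by rewrite -ge0_muleDl ?lee_fin ?t0 ?(ltW t1p) // -EFinD addrC subrK mul1e.
have := Hc0 x y t; rewrite t0 t1 => /(_ isT) H0.
apply: le_trans H0; apply: leeD; apply: lee_wpmul2l; rewrite ?lee_fin ?t0 ?(ltW t1p) //.
Qed.

Lemma line_concave (r lam m : R) : concave_e (fun x => (r + lam * (x - m))%:E).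
Proof.
move=> x y t _ /=; rewrite -!EFinM -EFinD lee_fin.
by rewrite le_eqVlt; apply/orP; left; apply/eqP; ring.
Qed.


Section Meet.
Variables (n : nat) (G : nat -> R -> \bar R) (mu2 : R).

Definition feasG i j t a b : Prop :=
  [/\ (i < n)%N, (j < n)%N, (0 <= t <= 1)%R & (t * a + (1 - t) * b = mu2)%R].
Definition objG i j t a b := t%:E * G i a + (1 - t)%:E * G j b.

Lemma bigG_ge x i : (i < n)%N ->
  G i x <= \big[maxe/-oo]_(g <- [seq G i | i <- iota 0 n]) g x.
Proof.
move=> Hi; rewrite big_map.
have : i \in iota 0 n by rewrite mem_iota add0n.
elim: (iota 0 n) => //= a s IH; rewrite big_cons in_cons le_max.
by case/orP => [/eqP->|/IH->]; rewrite ?lexx ?orbT.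
Qed.

Lemma bigG_le x c : (forall i, (i < n)%N -> G i x <= c) ->
  \big[maxe/-oo]_(g <- [seq G i | i <- iota 0 n]) g x <= c.
Proof.
move=> H; rewrite big_map big_seq; elim/big_ind: _ => //.
- exact: leNye.
- by move=> a b Ha Hb; rewrite ge_max Ha Hb.
- by move=> i; rewrite mem_iota add0n => /andP[_ Hi]; apply: H.
Qed.

Lemma obj_le_h i j t a b h : feasG i j t a b -> concave_e h ->
  (forall x, \big[maxe/-oo]_(g <- [seq G i | i <- iota 0 n]) g x <= h x) ->
  objG i j t a b <= h mu2.
Proof.
case=> Hi Hj /andP[t0 t1] Hm Hc Hmaj.
have := Hc a b t; rewrite t0 t1 Hm => /(_ isT) H.
apply: le_trans H; apply: leeD; apply: lee_wpmul2l; rewrite ?lee_fin ?t0 ?subr_ge0 ?t1 //;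
  apply: le_trans (Hmaj _); exact: bigG_ge.
Qed.

Variables (i0 j0 : nat) (t0 a0 b0 : R).
Hypothesis Hf0 : feasG i0 j0 t0 a0 b0.
Hypothesis Hmax : forall i j t a b, feasG i j t a b -> objG i j t a b <= objG i0 j0 t0 a0 b0.
Hypothesis HnP : forall i x, (i < n)%N -> G i x != +oo.
Hypothesis Hfin : meet_op [seq G i | i <- iota 0 n] mu2 != +oo.

Lemma meet_val : meet_op [seq G i | i <- iota 0 n] mu2 = objG i0 j0 t0 a0 b0.
Proof.
set o := objG i0 j0 t0 a0 b0.
set gs := [seq G i | i <- iota 0 n].
have lo : o <= meet_op gs mu2.
  by apply/ereal_infP => _ [h [Hc _ Hmaj] <-]; exact: obj_le_h.
have up : forall h, concave_e h -> (forall x, h x < +oo) ->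
    (forall x, \big[maxe/-oo]_(g <- gs) g x <= h x) -> meet_op gs mu2 <= h mu2.
  by move=> h Hc Hlt Hmaj; apply: ereal_inf_lbound; exists h.
have one : forall i, (i < n)%N -> G i mu2 <= o.
  move=> i Hi; have := @Hmax i i 1%R mu2 mu2; rewrite /objG subrr mul1e mul0e adde0.
  by apply; split => //; [rewrite ler01 lexx | rewrite subrr mul1r mul0r addr0].
apply/eqP; rewrite eq_le lo andbT.
have step : forall sg : R, sg != 0%R ->
    (forall i x, (i < n)%N -> (sg * (x - mu2) < 0)%R -> G i x = -oo) ->
    meet_op gs mu2 <= o.
  move=> sg sgn0 HG.
  have [h0 [Hc0 Hlt0 Hmaj0]] : exists h0, [/\ concave_e h0, (forall x, h0 x < +oo) &
      (forall x, \big[maxe/-oo]_(g <- gs) g x <= h0 x)].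
    apply: contrapT => nP; move/negP: Hfin; apply; rewrite /meet_op.
    rewrite (_ : image _ _ = set0) ?ereal_inf0 //.
    by apply/seteqP; split => // v [h Ph _]; apply: nP; exists h.
  have Ho : o <= h0 mu2 by apply: obj_le_h Hf0 Hc0 Hmaj0.
  have Hon : o != +oo by apply: contraNneq Hfin => Ho'; rewrite -leye_eq -Ho' lo.
  apply: le_trans (up (fun x => if (sg * (x - mu2) < 0)%R then -oo
                                else if x == mu2 then o else h0 x) _ _ _) _.
  - exact: step_concave.
  - move=> x /=; case: ifP => _ //; case: ifP => _ //; by rewrite ltey.
  - move=> x; apply: bigG_le => i Hi /=.
    case: ifPn => Hs; first by rewrite (HG i x Hi Hs).
    case: eqVneq => [->|_]; first exact: one.
    by apply: le_trans (Hmaj0 x); exact: bigG_ge.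
  - by rewrite /= subrr mulr0 ltxx eqxx.
have [[i1 [x1 [Hi1 Hx1 G1]]]|nL] :=
  pselect (exists i x, [/\ (i < n)%N, (x < mu2)%R & G i x != -oo]); last first.
  apply: (step 1%R); first exact: oner_neq0.
  move=> i x Hi; rewrite mul1r subr_lt0 => Hx.
  by case: (eqVneq (G i x) -oo) => // Hn; exfalso; apply: nL; exists i, x.
have [[i2 [x2 [Hi2 Hx2 G2]]]|nRt] :=
  pselect (exists i x, [/\ (i < n)%N, (mu2 < x)%R & G i x != -oo]); last first.
  apply: (step (-1)%R); first by rewrite oppr_eq0 oner_neq0.
  move=> i x Hi; rewrite mulN1r oppr_lt0 subr_gt0 => Hx.
  by case: (eqVneq (G i x) -oo) => // Hn; exfalso; apply: nRt; exists i, x.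
have [y1 Gy1] := fin_of G1 (HnP x1 Hi1).
have [y2 Gy2] := fin_of G2 (HnP x2 Hi2).
have two : forall i j x' x y' y, (i < n)%N -> (j < n)%N -> (x' < mu2)%R -> (mu2 < x)%R ->
    G i x' = y'%:E -> G j x = y%:E ->
    (((x - mu2) * y' + (mu2 - x') * y) / (x - x'))%:E <= o.
  move=> i j x' x y' y Hi Hj Hx' Hx Gi Gj.
  have d0 : (0 < x - x')%R by rewrite subr_gt0; apply: lt_trans Hx.
  have dn0 : (x - x' != 0)%R by rewrite gt_eqF.
  have := @Hmax i j ((x - mu2) / (x - x'))%R x' x; rewrite /objG Gi Gj -!EFinM -EFinD.
  have -> : ((x - mu2) / (x - x') * y' + (1 - (x - mu2) / (x - x')) * y =
            ((x - mu2) * y' + (mu2 - x') * y) / (x - x'))%R by field.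
  apply; split => //; last by field.
  apply/andP; split.
    by apply: divr_ge0; [rewrite subr_ge0; exact: ltW | exact: ltW].
  by rewrite ler_pdivrMr // mul1r lerD2l lerN2; exact: ltW.
have o1 := two _ _ _ _ _ _ Hi1 Hi2 Hx1 Hx2 Gy1 Gy2.
have Hon : o != +oo by apply: contraNneq Hfin => Ho'; rewrite -leye_eq -Ho' lo.
have Hom : o != -oo by apply: contraTneq o1 => ->; rewrite leeNy_eq.
have [r Hr] := fin_of Hom Hon.
have slope : forall i j x' x y' y, (i < n)%N -> (j < n)%N -> (x' < mu2)%R -> (mu2 < x)%R ->
    G i x' = y'%:E -> G j x = y%:E -> ((y - r) / (x - mu2) <= (r - y') / (mu2 - x'))%R.
  move=> i j x' x y' y Hi Hj Hx' Hx Gi Gj.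
  have := two _ _ _ _ _ _ Hi Hj Hx' Hx Gi Gj; rewrite Hr lee_fin.
  have d0 : (0 < x - x')%R by rewrite subr_gt0; apply: lt_trans Hx.
  rewrite ler_pdivrMr // => H.
  rewrite ler_pdivrMr ?subr_gt0 // mulrAC ler_pdivlMr ?subr_gt0 //.
  lra.
pose S : set R := (fun s : R => exists i x y, [/\ (i < n)%N, (mu2 < x)%R, G i x = y%:E &
                                        s = (y - r) / (x - mu2)]%R).
have S0 : (S !=set0)%classic by exists ((y2 - r) / (x2 - mu2))%R; exists i2, x2, y2.
have Sub : forall i x y, (i < n)%N -> (x < mu2)%R -> G i x = y%:E ->
    ubound S ((r - y) / (mu2 - x))%R.
  move=> i x y Hi Hx Gi s [j [z [w [Hj Hz Gw ->]]]]; exact: slope Gi Gw.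
have hsup : has_sup S by split => //; exists ((r - y1) / (mu2 - x1))%R; exact: Sub Gy1.
pose lam := sup S.
apply: le_trans (up (fun x => (r + lam * (x - mu2))%:E) (line_concave _ _ _) _ _) _.
- by move=> x; exact: ltry.
- move=> x; apply: bigG_le => i Hi.
  case: (eqVneq (G i x) -oo) => [->|Gn]; first exact: leNye.
  have [y Gy] := fin_of Gn (HnP x Hi).
  rewrite Gy lee_fin.
  case: (ltgtP x mu2) => Hx.
  + have := ge_sup S0 (Sub i x y Hi Hx Gy).
    rewrite ler_pdivlMr ?subr_gt0 // => H; rewrite /lam; lra.
  + have : ((y - r) / (x - mu2) <= lam)%R by apply: sup_upper_bound => //; exists i, x, y.
    rewrite ler_pdivrMr ?subr_gt0 // => H; rewrite /lam in H *; lra.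
  + have := one i Hi; rewrite Hx in Gy; rewrite Gy Hr lee_fin Hx subrr mulr0 addr0 //.
- by rewrite /= subrr mulr0 addr0 Hr.
Qed.

End Meet.

Lemma U_state (g : tree R) (U : seq nat -> R -> \bar R) p s :
  learned_epfs g U -> subtree g p = Some s ->
  (forall mu, (Vlo s <= mu <= Vhi s)%R -> exists v, U p mu = v%:E) /\
  (forall mu, U p mu = -oo \/ exists v, U p mu = v%:E /\ (Vlo s <= mu <= Vhi s)%R).
Proof.
move=> [HL HN] Hs; case: s Hs => [r1 r2|b cs] Hs.
  rewrite (HL _ _ _ Hs) /leaf_epf /=; split.
    move=> mu /= /andP[H1 H2]; exists r1; rewrite (_ : mu = r2) ?eqxx //; by apply/eqP; rewrite eq_le H1 H2.
  move=> mu; case: eqVneq => [->|_]; last by left.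
  by right; exists r1; rewrite lexx.
have Hpl := HN _ _ _ Hs; split; first by move=> mu; exact: pl_fin.
move=> mu; case: (boolP (Vlo (Node b cs) <= mu <= Vhi (Node b cs))%R) => Hin.
  by right; have [v Hv] := pl_fin Hpl Hin; exists v.
left; case: Hpl => xs [ys [_ [Hout _ _]]]; apply: Hout; exact/negP.
Qed.

End H.

Unset Implicit Arguments.

Theorem theorem6 (R : realType) (g : tree R) (U : seq nat -> R -> \bar R)
  (Q : seq nat -> R -> R) (eps : R) :
  wf_tree g ->
  learned_epfs g U ->
  (forall p s, subtree g p = Some s -> (Linf (U p) (target U p s) <= eps%:E)%E) ->
  induced_payoff g U Q ->
  forall p s, subtree g p = Some s ->
  forall mu2 : R, Vlo s <= mu2 <= Vhi s ->
    (`|(Q p mu2)%:E - U p mu2| <= (eps * (depth g)%:R)%:E)%E.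
Proof.
move=> _ HU HL [HQl HQn].
have ediff_le : forall p s mu, subtree g p = Some s -> (ediff (U p mu) (target U p s mu) <= eps%:E)%E.
  move=> p s mu Hs; apply: le_trans (HL p s Hs); apply: ereal_sup_ubound; by exists mu.
have eps0 : (0 <= eps)%R.
  have := ediff_le [::] g 0%R erefl; rewrite /ediff; case: ifP => _.
    by rewrite lee_fin.
  by move=> H; rewrite -lee_fin; apply: le_trans H; exact: abse_ge0.
suff main : forall k p s, subtree g p = Some s -> (depth s <= k)%N ->
    forall mu2, (Vlo s <= mu2 <= Vhi s)%R ->
    (`|(Q p mu2)%:E - U p mu2| <= (eps * (depth s)%:R)%:E)%E.
  move=> p s Hs mu2 Hmu; apply: le_trans (main _ p s Hs (leqnn _) mu2 Hmu) _.
  by rewrite lee_fin ler_wpM2l // ler_nat; exact: depth_sub Hs.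
have leafc : forall p r1 r2 mu2, subtree g p = Some (Leaf r1 r2) ->
    (Vlo (Leaf r1 r2) <= mu2 <= Vhi (Leaf r1 r2))%R ->
    (`|(Q p mu2)%:E - U p mu2| <= (eps * 0%:R)%:E)%E.
  move=> p r1 r2 mu2 Hs /= /andP[H1 H2].
  have -> : mu2 = r2 by apply/eqP; rewrite eq_le H1 H2.
  by rewrite (HQl _ _ _ Hs) (HU.1 _ _ _ Hs) /leaf_epf eqxx -EFinB subrr abse0 mulr0.
elim=> [|k IH] p [r1 r2|b cs] Hs Hk mu2 Hmu; try exact: (leafc p r1 r2 mu2 Hs Hmu).
  by [].
have [i [j [t [mu' [mu'' [Hfeas Hmaxim HQeq]]]]]] := HQn p b cs mu2 Hs Hmu.
pose G := fun i => trunc (U (rcons p i)) (beta b cs i).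
set D := foldr maxn 0 (map (@depth R) cs).
have HD : depth (Node b cs) = D.+1 by [].
have child : forall i, (i < size cs)%N -> subtree g (rcons p i) = Some (nth (Leaf 0 0) cs i).
  by move=> i0 Hi; exact: subtree_rcons Hs Hi.
have HnP : forall i x, (i < size cs)%N -> (G i x != +oo)%E.
  move=> i0 x Hi; rewrite /G /trunc; case: ifP => // _.
  have [_ H] := U_state HU (child i0 Hi).
  by case: (H x) => [->|[v [-> _]]].
have [Hin _] := U_state HU Hs.
have [u Hu] := Hin mu2 Hmu.
have Hed : (ediff (U p mu2) (meet_op [seq G i | i <- iota 0 (size cs)] mu2) <= eps%:E)%E
  := ediff_le p _ mu2 Hs.
have Hfin : (meet_op [seq G i | i <- iota 0 (size cs)] mu2 != +oo)%E.
  by apply: contraTneq Hed => ->; rewrite Hu /ediff /=.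
have Hmn : (meet_op [seq G i | i <- iota 0 (size cs)] mu2 != -oo)%E.
  by apply: contraTneq Hed => ->; rewrite Hu /ediff /=.
have Hmv := @meet_val R (size cs) G mu2 i j t mu' mu'' Hfeas Hmaxim HnP Hfin.
rewrite Hmv in Hfin Hmn Hed.
have [r Hr] := fin_of Hmn Hfin.
rewrite Hr Hu /ediff /= lee_fin in Hed.
have term : forall i0 w m, (i0 < size cs)%N -> (0 <= w)%R -> (w%:E * G i0 m != -oo)%E ->
    exists a, (w%:E * G i0 m = (w * a)%:E)%E /\
      (`|w * Q (rcons p i0) m - w * a| <= w * (eps * D%:R))%R.
  move=> i0 w m Hi0 w0 Hn.
  case: (eqVneq w 0%R) => [->|wn0].
    by exists 0%R; rewrite mul0e !mul0r subrr normr0.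
  have wp : (0 < w)%R by rewrite lt_def wn0.
  have Gn : (G i0 m != -oo)%E.
    by apply: contraNneq Hn => ->; rewrite gt0_muleNy ?lte_fin.
  have [v Gv] := fin_of Gn (HnP i0 m Hi0).
  exists v; split; first by rewrite Gv -EFinM.
  move: Gv; rewrite /G /trunc; case: ifP => _ Uv; last by [].
  have [_ H] := U_state HU (child i0 Hi0).
  case: (H m) => [Hm|[v' [Hv' Hdom]]]; first by rewrite Hm in Uv.
  have Hd : (depth (nth (Leaf 0%R 0%R) cs i0) <= k)%N.
    by rewrite -ltnS; apply: (leq_trans _ Hk); exact: depth_child.
  have := IH _ _ (child i0 Hi0) Hd m Hdom.
  rewrite Uv -EFinB abse_EFin lee_fin => Hc.
  rewrite -mulrBr normrM ger0_norm // ler_wpM2l //.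
  apply: le_trans Hc _; rewrite ler_wpM2l // ler_nat.
  exact: foldr_nth.
case: Hfeas => Hi Hj /andP[t0 t1] _.
have Ht1 : (t%:E * G i mu' != -oo)%E.
  by apply/negP => /eqP E; move: Hr; rewrite /objG E addNye.
have Ht2 : ((1 - t)%:E * G j mu'' != -oo)%E.
  by apply/negP => /eqP E; move: Hr; rewrite /objG E addeNy.
have [a [Ea Ha]] := term i t mu' Hi t0 Ht1.
have [c [Ec Hc]] := term j (1 - t)%R mu'' Hj (ltac:(by rewrite subr_ge0)) Ht2.
move: Hr; rewrite /objG Ea Ec -EFinD => -[Hr].
rewrite Hu -EFinB abse_EFin lee_fin HQeq HD -addn1 natrD mulrDr mulr1.
move: Ha Hc Hed; rewrite !ler_norml => /andP[Ha1 Ha2] /andP[Hc1 Hc2] /andP[He1 He2].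
apply/andP; split; lra.
Qed.
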